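(* Let $(k,|\cdot|)$ be a complete non-Archimedean field of characteristic $p>0$ with nontrivial value group. The following are equivalent: (i) $T_n(k)$ is Frobenius split for each integer $n>0$; (ii) $T_n(k)$ has a nonzero $p^{-1}$-linear map for each integer $n>0$; (iii) there exists an integer $n>0$ for which $T_n(k)$ has a nonzero $p^{-1}$-linear map; (iv) $T_1(k)$ has a nonzero $p^{-1}$-linear map; (v) $T_1(k)$ is Frobenius split; (vi) there exists a nonzero continuous $k$-linear map $f\colon k^{1/p}\to k$.
   Context: A non-Archimedean field $(k,|\cdot|)$ is a field with a map $|\cdot|\colon k\to\mathbb{R}_{\ge0}$ satisfying $|x|=0$ iff $x=0$, $|x+y|\le\max\{|x|,|y|\}$, $|xy|=|x||y|$, assumed complete and with $|k^\times|\ne\{1\}$. The Tate algebra $T_n(k)$ is the subring of $k[[X_1,\dots,X_n]]$ of series $\sum_\nu a_\nu X^\nu$ with $|a_\nu|\to0$ as $\nu_1+\dots+\nu_n\to\infty$. For a ring $R$ of characteristic $p$, $F_{R*}R$ is $R$ with $R$-module structure $r\cdot x=r^px$; an $R$-linear map $F_{R*}R\to R$ is a $p^{-1}$-linear map; $R$ is Frobenius split if some $p^{-1}$-linear map sends $1\mapsto1$. The field $k^{1/p}$ of $p$-th roots of elements of $k$ (identified with $F_{k*}k$) carries the unique absolute value extending $|\cdot|$, making it a normed $k$-vector space; continuity refers to the metric topologies on $k^{1/p}$ and $k$. *)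

(* Defs.v *)
From Stdlib Require Import Reals.
From HB Require Import structures.
From mathcomp Require Import all_boot all_order all_algebra.
Set Implicit Arguments. Unset Strict Implicit. Unset Printing Implicit Defensive.
Import GRing.Theory.
Local Open Scope ring_scope.

Record nonarch_abs (k : fieldType) (abs : k -> R) : Prop := {
  abs_ge0 : forall x : k, Rle R0 (abs x);
  abs_eq0 : forall x : k, abs x = R0 <-> x = 0;
  abs_ultra : forall x y : k, Rle (abs (x + y)) (Rmax (abs x) (abs y));
  abs_mul : forall x y : k, abs (x * y) = Rmult (abs x) (abs y) }.

Definition abs_complete (k : fieldType) (abs : k -> R) : Prop :=
  forall u : nat -> k,
    (forall eps, Rlt R0 eps -> exists N : nat, forall m n : nat,
        (N <= m)%N -> (N <= n)%N -> Rlt (abs (u m - u n)) eps) ->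
    exists l : k, forall eps, Rlt R0 eps -> exists N : nat, forall n : nat,
        (N <= n)%N -> Rlt (abs (u n - l)) eps.

Definition abs_nontrivial (k : fieldType) (abs : k -> R) : Prop :=
  exists x : k, x <> 0 /\ abs x <> R1.

Definition mi (n : nat) := {ffun 'I_n -> nat}.
Definition series (k : fieldType) (n : nat) := mi n -> k.
Definition deg (n : nat) (nu : mi n) : nat := (\sum_(i < n) nu i)%N.

Definition szero (k : fieldType) (n : nat) : series k n := fun _ => 0.
Definition sone (k : fieldType) (n : nat) : series k n :=
  fun nu => if nu == [ffun => 0%N] then 1 else 0.
Definition sadd (k : fieldType) (n : nat) (a b : series k n) : series k n :=
  fun nu => a nu + b nu.
(* Cauchy product: (ab)_nu = sum_{mu <= nu} a_mu b_{nu - mu} *)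
Definition smul (k : fieldType) (n : nat) (a b : series k n) : series k n :=
  fun nu =>
    \sum_(mu : {ffun 'I_n -> 'I_(deg nu).+1} | [forall i, (mu i <= nu i)%N])
      a [ffun i => nat_of_ord (mu i)] * b [ffun i => (nu i - mu i)%N].
Definition spow (k : fieldType) (n : nat) (a : series k n) (m : nat) : series k n :=
  iter m (smul a) (@sone k n).

Definition tate (k : fieldType) (abs : k -> R) (n : nat) (a : series k n) : Prop :=
  forall eps, Rlt R0 eps -> exists N : nat, forall nu : mi n,
    (N <= deg nu)%N -> Rlt (abs (a nu)) eps.

(* phi : F_* T_n(k) -> T_n(k) is T_n(k)-linear, i.e. a p^{-1}-linear map
   (phi is only relevant on T_n(k); it must map T_n(k) into T_n(k)). *)
Definition pinv_linear (k : fieldType) (abs : k -> R) (n p : nat)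
    (phi : series k n -> series k n) : Prop :=
  [/\ forall x, tate abs x -> tate abs (phi x),
      forall x y, tate abs x -> tate abs y -> phi (sadd x y) = sadd (phi x) (phi y)
    & forall r x, tate abs r -> tate abs x -> phi (smul (spow r p) x) = smul r (phi x)].

Definition has_nonzero_pinv_map (k : fieldType) (abs : k -> R) (n p : nat) : Prop :=
  exists phi : series k n -> series k n,
    pinv_linear abs p phi /\ exists x, tate abs x /\ phi x <> @szero k n.

Definition frobenius_split (k : fieldType) (abs : k -> R) (n p : nat) : Prop :=
  exists phi : series k n -> series k n,
    pinv_linear abs p phi /\ phi (@sone k n) = @sone k n.

(* k^{1/p} identified with F_* k (element x of F_* k <-> x^{1/p});
   its absolute value is |x^{1/p}| = |x|^{1/p}. *)
Definition root_abs (k : fieldType) (abs : k -> R) (p : nat) (x : k) : R :=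
  if Rlt_dec R0 (abs x) then Rpower (abs x) (Rinv (INR p)) else R0.

Definition has_nonzero_cont_map (k : fieldType) (abs : k -> R) (p : nat) : Prop :=
  exists f : k -> k,
    [/\ forall x y, f (x + y) = f x + f y,
        forall c x, f (c ^+ p * x) = c * f x,
        exists x, f x <> 0
      & forall x eps, Rlt R0 eps -> exists delta, Rlt R0 delta /\
          forall y, Rlt (root_abs abs p (y - x)) delta -> Rlt (abs (f y - f x)) eps].

(* Main.v *)
Require Import Defs.
From Stdlib Require Import Reals Lra Classical ClassicalEpsilon FunctionalExtensionality.
From HB Require Import structures.
From mathcomp Require Import all_boot all_order all_algebra.
From mathcomp Require Import mpoly.
Import GRing.Theory.
Local Open Scope ring_scope.
Set Implicit Arguments. Unset Strict Implicit. Unset Printing Implicit Defensive.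

Section Ser.
Variable k : fieldType.
Variable n : nat.

Definition tomn (nu : mi n) : 'X_{1..n} := [multinom nu i | i < n].
Definition ofmn (m : 'X_{1..n}) : mi n := [ffun i => m i].
Lemma tomnK nu : ofmn (tomn nu) = nu.
Proof. by apply/ffunP=> i; rewrite ffunE mnmE. Qed.
Lemma ofmnK m : tomn (ofmn m) = m.
Proof. by apply/mnmP=> i; rewrite mnmE ffunE. Qed.
Lemma tomnE nu i : tomn nu i = nu i.
Proof. by rewrite mnmE. Qed.
Lemma mdeg_tomn nu : mdeg (tomn nu) = deg nu.
Proof. by rewrite mdegE /deg; apply: eq_bigr=> i _; rewrite mnmE. Qed.

Definition trunc (d : nat) (s : series k n) : {mpoly k[n]} :=
  \sum_(b : 'X_{1..n < d}) s (ofmn b) *: 'X_[b].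

Lemma mcoeff_trunc d s m :
  (trunc d s)@_m = if (mdeg m < d)%N then s (ofmn m) else 0.
Proof.
rewrite /trunc raddf_sum /=.
under eq_bigr => b _ do rewrite mcoeffZ mcoeffX.
case: ifP => hm.
  rewrite (bigD1 (BMultinom hm)) //= eqxx mulr1 big1 ?addr0 // => b hb.
  case: eqP => [e|]; last by rewrite mulr0.
  by move: hb; rewrite -val_eqE /= e eqxx.
rewrite big1 // => b _; case: eqP => [e|]; last by rewrite mulr0.
by move: hm; rewrite -e bmdeg.
Qed.

Lemma smulE (a b : series k n) nu d : (deg nu < d)%N ->
  smul a b nu = (trunc d a * trunc d b)@_(tomn nu).
Proof.
move=> hd; rewrite mcoeffM /smul.
set D := deg nu.
have hD : (mdeg (tomn nu)).+1 = D.+1 by rewrite mdeg_tomn.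
pose bmk (x : 'X_{1..n}) : 'X_{1..n < (mdeg (tomn nu)).+1} := insubd bm0 x.
pose h (mu : {ffun 'I_n -> 'I_D.+1}) :=
  (bmk (tomn [ffun i => nat_of_ord (mu i)]), bmk (tomn [ffun i => (nu i - mu i)%N])).
pose h' (kk : 'X_{1..n < (mdeg (tomn nu)).+1, (mdeg (tomn nu)).+1}) :
   {ffun 'I_n -> 'I_D.+1} := [ffun i => inord (kk.1 i)].
have leD : forall i, (nu i <= D)%N.
  move=> i; rewrite /D /deg (bigD1 i) //=; exact: leq_addr.
have bmkE : forall x, (mdeg x <= D)%N -> val (bmk x) = x.
  by move=> x hx; rewrite /bmk val_insubd ifT // hD ltnS.
have Hc : forall mu, ((tomn nu == ((h mu).1 + (h mu).2)%MM) && (h' (h mu) == mu))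
   = [forall i, (mu i <= nu i)%N].
  move=> mu; apply/idP/idP.
    * case/andP=> /eqP e /eqP e2; apply/forallP=> i.
      have e' := congr1 (fun f : {ffun 'I_n -> 'I_D.+1} => nat_of_ord (f i)) e2.
      move: e'; rewrite /= ffunE inordK; last first.
        rewrite ltnS; apply: leq_trans (leD i). 
        have := congr1 (fun m : 'X_{1..n} => m i) e; rewrite /= mnmDE tomnE => ->.
        exact: leq_addr.
      move=> <-.
      have := congr1 (fun m : 'X_{1..n} => m i) e; rewrite /= mnmDE tomnE => ->.
      exact: leq_addr.
    * move/forallP=> hle.
      have h1 : (mdeg (tomn [ffun i => nat_of_ord (mu i)]) <= D)%N.
        rewrite mdeg_tomn /D /deg; apply: leq_sum => i _; rewrite ffunE; exact: hle.
      have h2 : (mdeg (tomn [ffun i => (nu i - mu i)%N]) <= D)%N.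
        rewrite mdeg_tomn /D /deg; apply: leq_sum => i _; rewrite ffunE; exact: leq_subr.
      apply/andP; split.
        apply/eqP/mnmP=> i; rewrite /= mnmDE !bmkE // !tomnE !ffunE subnKC //; exact: hle.
      apply/eqP/ffunP=> i; apply: val_inj; rewrite /= ffunE bmkE // tomnE ffunE inordK //.
symmetry; rewrite (reindex_onto h h').
- apply: eq_big => [mu|mu]; first exact: Hc.
    rewrite Hc => /forallP hle.
    have h1 : (mdeg (tomn [ffun i => nat_of_ord (mu i)]) <= D)%N.
      rewrite mdeg_tomn /D /deg; apply: leq_sum => i _; rewrite ffunE; exact: hle.
    have h2 : (mdeg (tomn [ffun i => (nu i - mu i)%N]) <= D)%N.
      rewrite mdeg_tomn /D /deg; apply: leq_sum => i _; rewrite ffunE; exact: leq_subr.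
    rewrite /= !mcoeff_trunc !bmkE // !mdeg_tomn.
    rewrite !ifT ?tomnK //.
      apply: leq_ltn_trans hd; rewrite /deg; apply: leq_sum => i _; rewrite ffunE; exact: leq_subr.
    apply: leq_ltn_trans hd; rewrite /deg; apply: leq_sum => i _; rewrite ffunE; exact: hle.
- move=> [k1 k2] /= /eqP e.
  have hk1 : forall i, (k1 i <= nu i)%N.
    move=> i; have := congr1 (fun m : 'X_{1..n} => m i) e; rewrite /= mnmDE tomnE => ->.
    exact: leq_addr.
  have hk2 : forall i, (k2 i <= nu i)%N.
    move=> i; have := congr1 (fun m : 'X_{1..n} => m i) e; rewrite /= mnmDE tomnE => ->.
    exact: leq_addl.
  rewrite /h; congr pair; apply: val_inj; rewrite /= bmkE.
  + apply/mnmP=> i; rewrite tomnE !ffunE inordK //; apply: leq_ltn_trans (hk1 i) _; exact: leD.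
  + rewrite mdeg_tomn /D /deg; apply: leq_sum => i _; rewrite !ffunE inordK //; last by
      apply: leq_ltn_trans (hk1 i) _; exact: leD.
  + apply/mnmP=> i; rewrite tomnE !ffunE inordK; last by apply: leq_ltn_trans (hk1 i) _; exact: leD.
    have := congr1 (fun m : 'X_{1..n} => m i) e; rewrite /= mnmDE tomnE => ->.
    by rewrite addKn.
  + rewrite mdeg_tomn /D /deg; apply: leq_sum => i _; rewrite !ffunE; exact: leq_subr.
Qed.

Lemma mcoeff_XM (a m : 'X_{1..n}) (Q : {mpoly k[n]}) :
  ('X_[a] * Q)@_m = if (a <= m)%MM then Q@_(m - a)%MM else 0.
Proof.
case: ifP => ha.
  have -> : m = (a + (m - a))%MM.
    by apply/mnmP=> i; rewrite mnmDE mnmBE subnKC //; exact: (mnm_lepP ha).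
  by rewrite mulrC mcoeffMX; congr (_@__); apply/mnmP=> i; rewrite !(mnmBE, mnmDE) addKn.
rewrite mcoeffM big1 // => kk /eqP e; rewrite mcoeffX.
case: eqP => [ea|]; last by rewrite mul0r.
exfalso; move/negP: ha; apply; apply/mnm_lepP=> i.
have := congr1 (fun x : 'X_{1..n} => x i) e; rewrite /= mnmDE -ea => ->; exact: leq_addr.
Qed.

Lemma mcoeffM_loc (P A B : {mpoly k[n]}) d (m : 'X_{1..n}) :
  (forall kk : 'X_{1..n}, (mdeg kk < d)%N -> A@_kk = B@_kk) -> (mdeg m < d)%N ->
  (P * A)@_m = (P * B)@_m.
Proof.
move=> hAB hm; rewrite !mcoeffM; apply: eq_bigr => kk e; congr (_ * _).
apply: hAB; apply: leq_ltn_trans hm; apply: (@leq_trans (mdeg (kk.1 + kk.2)%MM)).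
  by rewrite mdegD leq_addl.
by rewrite -(eqP e).
Qed.

Lemma deg_ofmn m : deg (ofmn m) = mdeg m.
Proof. by rewrite -mdeg_tomn ofmnK. Qed.

Lemma spowE (r : series k n) j d nu : (deg nu < d)%N ->
  spow r j nu = ((trunc d r) ^+ j)@_(tomn nu).
Proof.
elim: j nu => [|j IH] nu hd.
  rewrite /spow /= /sone expr0 mcoeff1.
  have -> : (tomn nu == 0%MM) = (nu == [ffun => 0%N]).
    apply/eqP/eqP => [e|->]; last by apply/mnmP=> i; rewrite tomnE ffunE mnm0E.
    by apply/ffunP=> i; rewrite ffunE -tomnE e mnm0E.
  by case: eqP.
rewrite /spow iterS -/(spow r j) (smulE _ _ hd) exprS.
apply: (@mcoeffM_loc _ _ _ d); last by rewrite mdeg_tomn.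
move=> kk hkk; rewrite mcoeff_trunc hkk IH ?ofmnK // deg_ofmn //.
Qed.

Lemma mpoly_pchar p : p \in [pchar k] -> p \in [pchar {mpoly k[n]}].
Proof.
case/andP=> pp /eqP p0; apply/andP; split => //.
by rewrite -mpolyC_nat p0.
Qed.

Lemma frob_sum p (hp : p \in [pchar k]) (I : Type) (s : seq I) (F : I -> {mpoly k[n]}) :
  (\sum_(i <- s) F i) ^+ p = \sum_(i <- s) F i ^+ p.
Proof.
have hp' := mpoly_pchar hp.
elim: s => [|x s IH]; first by rewrite !big_nil expr0n; case: p hp {hp'} => // /andP [].
rewrite !big_cons -(pFrobenius_autE hp') pFrobenius_autD_comm ?pFrobenius_autE ?IH //.
exact: mulrC.
Qed.

Definition mono (c : k) (a : mi n) : series k n := fun nu => if nu == a then c else 0.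

Lemma trunc_mono c a d :
  trunc d (mono c a) = if (deg a < d)%N then c *: 'X_[tomn a] else 0.
Proof.
apply/mpolyP=> m; rewrite mcoeff_trunc /mono.
case: (eqVneq (ofmn m) a) => [<-|ne].
  rewrite deg_ofmn ofmnK; case: ifP => _; by rewrite ?mcoeffZ ?mcoeffX ?eqxx ?mulr1 ?mcoeff0.
have -> : (if (mdeg m < d)%N then 0 else 0) = 0 :> k by case: ifP.
case: ifP => _; rewrite ?mcoeffZ ?mcoeffX ?mcoeff0 //.
case: eqP => [e|]; last by rewrite mulr0.
by move: ne; rewrite -e tomnK eqxx.
Qed.

Definition mle (a nu : mi n) := [forall i, (a i <= nu i)%N].
Definition msub (nu a : mi n) : mi n := [ffun i => (nu i - a i)%N].
Definition madd (a b : mi n) : mi n := [ffun i => (a i + b i)%N].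

Lemma deg_le a nu : mle a nu -> (deg a <= deg nu)%N.
Proof. by move/forallP=> h; apply: leq_sum => i _; exact: h. Qed.

Lemma smul_mono c a (s : series k n) nu :
  smul (mono c a) s nu = if mle a nu then c * s (msub nu a) else 0.
Proof.
rewrite (smulE _ _ (ltnSn (deg nu))) trunc_mono.
case: (boolP (mle a nu)) => hle.
  have hda : (deg a < (deg nu).+1)%N by rewrite ltnS deg_le.
  rewrite hda.
  rewrite -scalerAl mcoeffZ mcoeff_XM ifT; last first.
    by apply/mnm_lepP=> i; rewrite !tomnE; exact: (forallP hle).
  rewrite mcoeff_trunc ifT; last first.
    rewrite ltnS -deg_ofmn; apply: deg_le; apply/forallP=> i.
    by rewrite ffunE mnmBE !tomnE; exact: leq_subr.
  congr (_ * s _); apply/ffunP=> i; by rewrite !ffunE mnmBE !tomnE.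
case: ifP => _; last by rewrite mul0r mcoeff0.
rewrite -scalerAl mcoeffZ mcoeff_XM ifF ?mulr0 //.
apply/negP=> /mnm_lepP h; move/negP: hle; apply; apply/forallP=> i.
by have := h i; rewrite !tomnE.
Qed.

Lemma smul_mono_mono c a e b :
  smul (mono c a) (mono e b) = mono (c * e) (madd a b).
Proof.
apply: functional_extensionality => nu; rewrite smul_mono /mono.
case: ifP => hle.
  have -> : (msub nu a == b) = (nu == madd a b).
    apply/eqP/eqP => [<-|->]; apply/ffunP=> i; rewrite !ffunE.
      by rewrite subnKC //; exact: (forallP hle).
    by rewrite addKn.
  by case: ifP; rewrite ?mulr0.
case: eqP => // e'; move/negP: hle; case; apply/forallP=> i; rewrite e' ffunE.
exact: leq_addr.
Qed.

Definition mscale (j : nat) (a : mi n) : mi n := [ffun i => (a i * j)%N].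

Lemma sone_mono : @sone k n = mono 1 [ffun => 0%N].
Proof. by []. Qed.

Lemma spow_mono c a j : spow (mono c a) j = mono (c ^+ j) (mscale j a).
Proof.
elim: j => [|j IH].
  rewrite /spow /= sone_mono expr0; congr mono; apply/ffunP=> i; by rewrite !ffunE muln0.
rewrite /spow iterS -/(spow _ j) IH smul_mono_mono exprS; congr mono.
by apply/ffunP=> i; rewrite !ffunE mulnS.
Qed.

Lemma trunc_frob p (hp : p \in [pchar k]) d r :
  (trunc d r) ^+ p = \sum_(b : 'X_{1..n < d}) r (ofmn b) ^+ p *: 'X_[(b *+ p)%MM].
Proof.
rewrite /trunc frob_sum //; apply: eq_bigr => b _; by rewrite exprZn mpolyXn.
Qed.

Section Core.
Variable p : nat.
Hypothesis hp : p \in [pchar k].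
Variable g : k -> k.
Hypothesis gD : forall y z, g (y + z) = g y + g z.
Hypothesis gZ : forall c y, g (c ^+ p * y) = c * g y.

Lemma g0 : g 0 = 0.
Proof. have h := gD 0 0; rewrite addr0 in h; by apply: (addrI (g 0)); rewrite addr0 -h. Qed.

Lemma g_sum (I : Type) (s : seq I) (F : I -> k) : g (\sum_(i <- s) F i) = \sum_(i <- s) g (F i).
Proof.
elim: s => [|x s IH]; first by rewrite !big_nil g0.
by rewrite !big_cons gD IH.
Qed.

Lemma p_gt0 : (0 < p)%N.
Proof. by apply: prime_gt0; case/andP: hp. Qed.

Lemma core (r x : series k n) mu :
  g (smul (spow r p) x (mscale p mu)) = smul r (fun nu => g (x (mscale p nu))) mu.
Proof.
set d := (deg (mscale p mu)).+1.
have hdm : (deg (mscale p mu) < d)%N by [].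
have hdmu : (deg mu < d)%N.
  rewrite ltnS; apply: leq_sum => i _; rewrite ffunE; apply: leq_pmulr; exact: p_gt0.
rewrite (smulE _ _ hdm) (smulE _ _ hdmu).
have L : (trunc d (spow r p) * trunc d x)@_(tomn (mscale p mu)) =
    ((trunc d r)^+p * trunc d x)@_(tomn (mscale p mu)).
  rewrite ![_ * trunc d x]mulrC; apply: (@mcoeffM_loc _ _ _ d); last by rewrite mdeg_tomn.
  by move=> kk hkk; rewrite mcoeff_trunc hkk (spowE _ _ (d := d)) ?ofmnK // deg_ofmn.
rewrite L.
rewrite trunc_frob // mulr_suml raddf_sum g_sum [trunc d r]/trunc mulr_suml raddf_sum.
apply: eq_bigr => b _ /=.
rewrite -!scalerAl !mcoeffZ !mcoeff_XM gZ.
have E : ((b *+ p)%MM <= tomn (mscale p mu))%MM = (b <= tomn mu)%MM.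
  apply/mnm_lepP/mnm_lepP => h i; have := h i; rewrite ?mulmnE !tomnE ffunE ?mulmnE.
    by rewrite leq_pmul2r // p_gt0.
  by rewrite leq_pmul2r // p_gt0.
rewrite E; case: ifP => hb; last by rewrite g0.
rewrite !mcoeff_trunc.
have hle1 : (mdeg (tomn (mscale p mu) - b *+ p)%MM < d)%N.
  rewrite ltnS mdegE /deg; apply: leq_sum => i _.
  by rewrite mnmBE !tomnE mulmnE ffunE leq_subr.
have hle2 : (mdeg (tomn mu - b)%MM < d)%N.
  apply: leq_ltn_trans hdmu; rewrite mdegE /deg; apply: leq_sum => i _.
  by rewrite mnmBE !tomnE leq_subr.
rewrite hle1 hle2; congr (_ * g (x _)).
by apply/ffunP=> i; rewrite !ffunE mnmBE !tomnE mulmnE ffunE mnmBE tomnE mulnBl.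
Qed.
End Core.
End Ser.

Section Abs.
Variable k : fieldType.
Variable abs : k -> R.
Hypothesis habs : nonarch_abs abs.

Lemma abs0 : abs 0 = R0.
Proof. by apply/(abs_eq0 habs). Qed.

Lemma abs_ge0' x : Rle R0 (abs x).
Proof. exact: (abs_ge0 habs). Qed.

Lemma absM x y : abs (x * y) = Rmult (abs x) (abs y).
Proof. exact: (abs_mul habs). Qed.

Lemma abs_neq0 x : x != 0 -> abs x <> R0.
Proof. by move=> /eqP hx /(abs_eq0 habs). Qed.

Lemma abs_gt0 x : x != 0 -> Rlt R0 (abs x).
Proof. move=> hx; have := abs_ge0' x; have := abs_neq0 hx; lra. Qed.

Lemma abs1 : abs 1 = R1.
Proof.
have h := absM 1 1; rewrite mulr1 in h.
have h0 : abs 1 <> R0 by apply: abs_neq0; exact: oner_neq0.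
apply: (Rmult_eq_reg_l (abs 1)) => //; rewrite -h; ring.
Qed.

Lemma absN1 : abs (-1) = R1.
Proof.
have h := absM (-1) (-1); rewrite mulrNN mulr1 abs1 in h.
have := abs_ge0' (-1); nra.
Qed.

Lemma absN x : abs (- x) = abs x.
Proof. by rewrite -mulN1r absM absN1; ring. Qed.

Lemma absB x y : abs (x - y) = abs (y - x).
Proof. by rewrite -absN opprB. Qed.

Lemma absV x : x != 0 -> abs (x^-1) = Rinv (abs x).
Proof.
move=> hx; have h := absM x x^-1; rewrite mulfV // abs1 in h.
have h0 := abs_neq0 hx.
apply: (Rmult_eq_reg_l (abs x)) => //; rewrite -h; field; exact h0.
Qed.

Lemma absX x j : abs (x ^+ j) = pow (abs x) j.
Proof. elim: j => [|j IH]; first by rewrite expr0 abs1. by rewrite exprS absM IH. Qed.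

Lemma abs_strict a b : Rlt (abs b) (abs a) -> Rle (abs a) (abs (a + b)).
Proof.
move=> h; have := abs_ultra habs (a + b) (- b); rewrite addrK absN.
unfold Rmax; case: Rle_dec => ?; lra.
Qed.

Lemma abs_sub_le a b : Rle (abs (a + b)) (Rmax (abs a) (abs b)).
Proof. by have := abs_ultra habs a b. Qed.
End Abs.

Section Root.
Variable p : nat.
Hypothesis pgt0 : (0 < p)%N.

Lemma INRp_pos : Rlt R0 (INR p).
Proof. apply: lt_0_INR; apply/ltP; exact: pgt0. Qed.

Lemma root_small (k : fieldType) (abs : k -> R) (habs : nonarch_abs abs) d :
  Rlt R0 d -> forall z, Rlt (abs z) (pow d p) -> Rlt (root_abs abs p z) d.
Proof.
move=> hd z hz; rewrite /root_abs; case: Rlt_dec => // h.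
have hp := INRp_pos.
have -> : d = Rpower (pow d p) (Rinv (INR p)).
  rewrite -Rpower_pow // Rpower_mult Rinv_r ?Rpower_1 //; lra.
apply: Rlt_Rpower_l; first by apply: Rinv_0_lt_compat.
split => //.
Qed.

Lemma root_small2 (k : fieldType) (abs : k -> R) (habs : nonarch_abs abs) d :
  Rlt R0 d -> exists d', Rlt R0 d' /\ forall z, Rlt (root_abs abs p z) d' -> Rlt (abs z) d.
Proof.
move=> hd; have hp := INRp_pos.
exists (Rpower d (Rinv (INR p))); split; first by rewrite /Rpower; apply: exp_pos.
move=> z; rewrite /root_abs; case: Rlt_dec => h hz; last first.
  have := abs_ge0' habs z; lra.
apply: Rnot_le_lt => hle; move: hz; apply: Rle_not_lt.
apply: Rle_Rpower_l; first by left; apply: Rinv_0_lt_compat.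
lra.
Qed.
End Root.

Lemma deg_mscale n p (mu : mi n) : deg (mscale p mu) = (deg mu * p)%N.
Proof. by rewrite /deg big_distrl /=; apply: eq_bigr => i _; rewrite ffunE. Qed.

Lemma L2 (k : fieldType) (p : nat) (abs : k -> R) (hp : p \in [pchar k])
  (habs : nonarch_abs abs) (n : nat) :
  has_nonzero_cont_map abs p -> frobenius_split abs n p.
Proof.
case=> f [fD fZ [x0 hx0] fC].
have pgt0 := p_gt0 hp.
have f0 : f 0 = 0.
  have h := fD 0 0; rewrite addr0 in h; by apply: (addrI (f 0)); rewrite addr0 -h.
have x0nz : x0 != 0 by apply/eqP=> e; apply: hx0; rewrite e.
have fx0 : f x0 != 0 by apply/eqP.
pose g y := f (x0 * y) * (f x0)^-1.
have gD : forall y z, g (y + z) = g y + g z by move=> y z; rewrite /g mulrDr fD mulrDl.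
have gZ : forall c y, g (c ^+ p * y) = c * g y.
  by move=> c y; rewrite /g mulrCA fZ mulrA.
have g1 : g 1 = 1 by rewrite /g mulr1 mulfV.
have g0' : g 0 = 0 by rewrite /g mulr0 f0 mul0r.
have gs : forall eps, Rlt R0 eps -> exists delta, Rlt R0 delta /\
    forall y, Rlt (abs y) delta -> Rlt (abs (g y)) eps.
  move=> eps he.
  have hf := abs_gt0 habs fx0.
  have hx := abs_gt0 habs x0nz.
  have [d0 [hd0 Hd0]] := fC 0 (Rmult eps (abs (f x0))) (Rmult_lt_0_compat _ _ he hf).
  exists (Rdiv (pow d0 p) (abs x0)); split.
    apply: Rdiv_lt_0_compat => //; exact: pow_lt.
  move=> y hy.
  have h1 : Rlt (abs (x0 * y)) (pow d0 p).
    rewrite (absM habs).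
    have -> : pow d0 p = Rmult (abs x0) (Rdiv (pow d0 p) (abs x0)) by field; lra.
    apply: Rmult_lt_compat_l => //.
  have h2 := Hd0 (x0 * y); rewrite subr0 f0 subr0 in h2.
  have h3 := h2 (root_small pgt0 habs hd0 h1).
  rewrite /g (absM habs) (absV habs) //.
  apply: (Rmult_lt_reg_r (abs (f x0))) => //.
  rewrite Rmult_assoc Rinv_l; last lra.
  lra.
exists (fun (x : series k n) mu => g (x (mscale p mu))); split; first split.
- move=> x hx eps he; have [delta [hd Hd]] := gs eps he.
  have [N HN] := hx delta hd; exists N => mu hmu; apply: Hd; apply: HN.
  rewrite deg_mscale; apply: leq_trans hmu _; exact: leq_pmulr.
- by move=> x y _ _; apply: functional_extensionality => mu; rewrite /sadd gD.
- move=> r x _ _; apply: functional_extensionality => mu; exact: core.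
- apply: functional_extensionality => mu; rewrite /sone.
  have -> : (mscale p mu == [ffun => 0%N]) = (mu == [ffun => 0%N]).
    apply/eqP/eqP => e; apply/ffunP=> i; have := congr1 (fun h : mi n => h i) e;
      rewrite !ffunE /=.
      by move/eqP; rewrite muln_eq0 (negbTE (lt0n_neq0 pgt0)) orbF => /eqP.
    by move=> ->.
  by case: eqP.
Qed.

Section Util.
Variable k : fieldType.
Variable abs : k -> R.
Hypothesis habs : nonarch_abs abs.
Variable n : nat.

Lemma deg_madd (a b : mi n) : deg (madd a b) = (deg a + deg b)%N.
Proof. by rewrite /deg -big_split /=; apply: eq_bigr => i _; rewrite ffunE. Qed.

Lemma abs_sum_lt (I : Type) (r : seq I) (P : pred I) (F : I -> k) eps :
  Rlt R0 eps -> (forall i, P i -> Rlt (abs (F i)) eps) ->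
  Rlt (abs (\sum_(i <- r | P i) F i)) eps.
Proof.
move=> he hF; apply: (big_ind (fun s => Rlt (abs s) eps)).
- by rewrite abs0.
- move=> x y hx hy; apply: Rle_lt_trans (abs_sub_le habs x y) _.
  unfold Rmax; case: Rle_dec => _; lra.
- exact: hF.
Qed.

Lemma tate_szero : tate abs (@szero k n).
Proof. by move=> eps he; exists 0%N => nu _; rewrite /szero abs0. Qed.

Lemma tate_sadd x y : tate abs x -> tate abs y -> tate abs (@sadd k n x y).
Proof.
move=> hx hy eps he; have [N1 H1] := hx eps he; have [N2 H2] := hy eps he.
exists (maxn N1 N2) => nu hnu; rewrite /sadd.
apply: Rle_lt_trans (abs_sub_le habs _ _) _.
have h1 := H1 nu (leq_trans (leq_maxl _ _) hnu).
have h2 := H2 nu (leq_trans (leq_maxr _ _) hnu).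
unfold Rmax; case: Rle_dec => _; lra.
Qed.

Lemma tate_mono c a : tate abs (@mono k n c a).
Proof.
move=> eps he; exists (deg a).+1 => nu hnu; rewrite /mono.
case: eqP => [e|_]; last by rewrite abs0.
by move: hnu; rewrite e ltnn.
Qed.

Lemma tate_dom (s t : series k n) :
  (forall nu, s nu = t nu \/ s nu = 0) -> tate abs t -> tate abs s.
Proof.
move=> hst ht eps he; have [N HN] := ht eps he; exists N => nu hnu.
by case: (hst nu) => ->; [exact: HN | rewrite abs0].
Qed.

Definition shift (a : mi n) (s : series k n) : series k n := fun nu => s (madd nu a).

Lemma tate_shift a s : tate abs s -> tate abs (shift a s).
Proof.
move=> hs eps he; have [N HN] := hs eps he; exists N => nu hnu; apply: HN.
by rewrite deg_madd; apply: leq_trans hnu (leq_addr _ _).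
Qed.

Lemma shiftE a (s : series k n) :
  (forall nu, ~~ mle a nu -> s nu = 0) -> s = smul (mono 1 a) (shift a s).
Proof.
move=> h; apply: functional_extensionality => nu; rewrite smul_mono.
case: ifP => hle; last by rewrite h // hle.
rewrite mul1r /shift; congr s; apply/ffunP=> i; rewrite !ffunE subnK //.
exact: (forallP hle).
Qed.

Lemma ssum_coef (I : Type) (r : seq I) (P : pred I) (F : I -> series k n) nu :
  (\big[@sadd k n/@szero k n]_(i <- r | P i) F i) nu = \sum_(i <- r | P i) F i nu.
Proof. by apply: (big_morph (fun s : series k n => s nu)). Qed.

Lemma tate_ssum (I : Type) (r : seq I) (P : pred I) (F : I -> series k n) :
  (forall i, P i -> tate abs (F i)) -> tate abs (\big[@sadd k n/@szero k n]_(i <- r | P i) F i).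
Proof.
move=> h; apply: (big_ind (fun s => tate abs s)); first exact: tate_szero.
  exact: tate_sadd.
exact: h.
Qed.

Variable p : nat.
Variable phi : series k n -> series k n.
Hypothesis hphi : pinv_linear abs p phi.

Lemma phi_tate x : tate abs x -> tate abs (phi x).
Proof. by case: hphi => h _ _; apply: h. Qed.

Lemma phiD x y : tate abs x -> tate abs y -> phi (sadd x y) = sadd (phi x) (phi y).
Proof. by case: hphi => _ h _; apply: h. Qed.

Lemma phiM r x : tate abs r -> tate abs x -> phi (smul (spow r p) x) = smul r (phi x).
Proof. by case: hphi => _ _ h; apply: h. Qed.

Lemma phi0 : phi (@szero k n) = @szero k n.
Proof.
have h := phiD tate_szero tate_szero.
have e : sadd (@szero k n) (@szero k n) = @szero k n.
  by apply: functional_extensionality => nu; rewrite /sadd /szero addr0.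
rewrite e in h; apply: functional_extensionality => nu.
have := congr1 (fun s => s nu) h; rewrite /sadd /szero => h'.
by apply: (addrI (phi (@szero k n) nu)); rewrite addr0 -h'.
Qed.

Lemma phi_ssum (I : Type) (r : seq I) (P : pred I) (F : I -> series k n) :
  (forall i, P i -> tate abs (F i)) ->
  phi (\big[@sadd k n/@szero k n]_(i <- r | P i) F i) =
  \big[@sadd k n/@szero k n]_(i <- r | P i) phi (F i).
Proof.
move=> h.
suff [] : tate abs (\big[@sadd k n/@szero k n]_(i <- r | P i) F i) /\
   phi (\big[@sadd k n/@szero k n]_(i <- r | P i) F i) =
   \big[@sadd k n/@szero k n]_(i <- r | P i) phi (F i) by [].
elim/big_rec2: _ => [|i y2 y1 Pi [ht <-]].
  by split; [exact: tate_szero | exact: phi0].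
split; first by apply: tate_sadd => //; exact: h.
by rewrite phiD //; exact: h.
Qed.

Hypothesis hp : p \in [pchar k].

Lemma mscale0 : mscale p ([ffun => 0%N] : mi n) = [ffun => 0%N].
Proof. by apply/ffunP=> i; rewrite !ffunE. Qed.

Lemma phi_shift u y : tate abs y ->
  phi (smul (mono 1 (mscale p u)) y) = smul (mono 1 u) (phi y).
Proof.
move=> hy; rewrite -phiM //; last exact: tate_mono.
by rewrite spow_mono expr1n.
Qed.

Lemma smul_mono0 t (s : series k n) nu : smul (mono t [ffun => 0%N]) s nu = t * s nu.
Proof.
rewrite smul_mono ifT; last by apply/forallP=> i; rewrite ffunE.
by congr (_ * s _); apply/ffunP=> i; rewrite !ffunE subn0.
Qed.

Lemma phi_scal t c a : phi (mono (t ^+ p * c) a) = smul (mono t [ffun => 0%N]) (phi (mono c a)).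
Proof.
rewrite -phiM; try exact: tate_mono.
rewrite spow_mono smul_mono_mono mscale0; congr (phi (mono _ _)).
by apply/ffunP=> i; rewrite !ffunE.
Qed.

Lemma phi_monoD c d a : phi (mono (c + d) a) = sadd (phi (mono c a)) (phi (mono d a)).
Proof.
rewrite -phiD; try exact: tate_mono.
congr phi; apply: functional_extensionality => nu; rewrite /sadd /mono.
by case: ifP; rewrite ?addr0.
Qed.
End Util.

Section StepA.
Variable k : fieldType.
Variable abs : k -> R.
Hypothesis habs : nonarch_abs abs.
Variable n : nat.
Variable p : nat.
Variable phi : series k n -> series k n.
Hypothesis hphi : pinv_linear abs p phi.
Hypothesis hp : p \in [pchar k].

Lemma le_deg (m : mi n) i : (m i <= deg m)%N.
Proof. by rewrite /deg (bigD1 i) //= leq_addr. Qed.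

Lemma stepA : (forall c a m, phi (mono c a) m = 0) ->
  forall x, tate abs x -> phi x = @szero k n.
Proof.
move=> H x hx; apply: functional_extensionality => m.
set N := (deg m).+1; set B := (N * p)%N.
pose pk (nu : mi n) := [pick i | (B <= nu i)%N].
pose pP : series k n := fun nu => if pk nu is None then x nu else 0.
pose pc (i : 'I_n) : series k n := fun nu => if pk nu == Some i then x nu else 0.
pose ui (i : 'I_n) : mi n := [ffun j => if j == i then N else 0%N].
have Ex : x = sadd pP (\big[@sadd k n/@szero k n]_(i < n) pc i).
  apply: functional_extensionality => nu; rewrite /sadd ssum_coef /pP /pc.
  case: (pk nu) => [j|].
    rewrite (bigD1 j) //= eqxx big1 ?addr0 ?add0r // => i hi; rewrite ifF //.
    by apply/eqP; case=> e; rewrite e eqxx in hi.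
  by rewrite big1 ?addr0 // => i _.
have tP : tate abs pP.
  by apply: (tate_dom habs _ hx) => nu; rewrite /pP; case: (pk nu); [right|left].
have tc : forall i, tate abs (pc i).
  by move=> i; apply: (tate_dom habs _ hx) => nu; rewrite /pc; case: eqP; [left|right].
set D := (n * B).+1.
have Epp : pP = \big[@sadd k n/@szero k n]_(b : 'X_{1..n < D}) mono (pP (ofmn b)) (ofmn b).
  apply: functional_extensionality => nu; rewrite ssum_coef /mono.
  case: (boolP (mdeg (tomn nu) < D)%N) => hD.
    rewrite (bigD1 (BMultinom hD)) //= tomnK eqxx big1 ?addr0 // => b hb.
    case: eqP => // e; exfalso; move/negP: hb; apply; apply/eqP/val_inj.
    by rewrite /= e ofmnK.
  rewrite big1; last first.
    move=> b _; case: eqP => // e; exfalso; move/negP: hD; apply.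
    by rewrite e ofmnK bmdeg.
  rewrite /pP /pk; case: pickP => // hnone; exfalso; move/negP: hD; apply.
  rewrite mdeg_tomn /D ltnS /deg.
  apply: (@leq_trans (\sum_(i < n) B)).
    apply: leq_sum => i _; have := hnone i; rewrite /= => /negbT; rewrite -ltnNge; exact: ltnW.
  by rewrite sum_nat_const card_ord.
have Epc : forall i, pc i = smul (mono 1 (mscale p (ui i))) (shift (mscale p (ui i)) (pc i)).
  move=> i; apply: shiftE => nu; rewrite /pc /pk.
  case: pickP => [j hj|]; last by [].
  case: eqP => // [[e]] hn; exfalso; move/negP: hn; apply; apply/forallP => l.
  rewrite !ffunE; case: eqP => [->|_]; last by [].
  by rewrite -e.
have -> : phi x m = phi (sadd pP (\big[@sadd k n/@szero k n]_(i < n) pc i)) m by rewrite -Ex.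
rewrite (phiD hphi) //; last by apply: (tate_ssum habs) => i _; exact: tc.
rewrite /sadd (phi_ssum habs hphi); last by move=> i _; exact: tc.
rewrite ssum_coef big1; last first.
  move=> i _; rewrite Epc (phi_shift habs hphi); last by apply: tate_shift; exact: tc.
  rewrite smul_mono ifF //; apply/negP=> /forallP /(_ i).
  by rewrite ffunE eqxx ltnNge le_deg.
rewrite Epp (phi_ssum habs hphi); last by move=> b _; exact: (tate_mono habs).
by rewrite ssum_coef big1 ?addr0 // => b _; rewrite H.
Qed.
End StepA.

Section StepB.
Variable k : fieldType.
Variable abs : k -> R.
Hypothesis habs : nonarch_abs abs.
Variable n' : nat.
Local Notation n := n'.+1.
Variable p : nat.
Hypothesis hp : p \in [pchar k].
Variable phi : series k n -> series k n.
Hypothesis hphi : pinv_linear abs p phi.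
Variables (a m : mi n).
Local Notation f c := (phi (mono c a) m).
Variable eps0 : R.
Hypothesis heps0 : Rlt R0 eps0.
Variable ch : R -> R -> k.
Hypothesis chP : forall M d, Rlt R0 d -> Rlt (abs (ch M d)) d /\ Rlt M (abs (f (ch M d))).

Let i0 : 'I_n := ord0.
Let K := (m i0).+1.
Definition uu (j : nat) : mi n := [ffun i => if i == i0 then (j * K)%N else 0%N].
Definition Ssum (l : seq k) :=
  \sum_(j < size l) phi (mono (nth 0 l j) a) (madd m (uu (size l - j))).
Definition step (l : seq k) := rcons l (ch (Rmax eps0 (abs (Ssum l))) (Rinv (INR (size l).+1))).
Definition cs J := iter J step [::].
Definition cc j := nth 0 (cs j.+1) j.

Lemma size_cs J : size (cs J) = J.
Proof. by elim: J => // J IH; rewrite /cs iterS -/(cs J) /step size_rcons IH. Qed.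

Lemma nth_cs J j : (j < J)%N -> nth 0 (cs J) j = cc j.
Proof.
elim: J => // J IH hj; rewrite /cs iterS -/(cs J) /step nth_rcons size_cs.
rewrite ltnS leq_eqVlt in hj; case/orP: hj => [/eqP ->|hlt].
  by rewrite ltnn eqxx /cc /cs iterS -/(cs J) /step nth_rcons size_cs ltnn eqxx.
by rewrite hlt IH.
Qed.
Lemma cc_def j : cc j = ch (Rmax eps0 (abs (Ssum (cs j)))) (Rinv (INR j.+1)).
Proof. by rewrite /cc /cs iterS -/(cs j) /step nth_rcons size_cs ltnn eqxx. Qed.

Lemma cc_small j : Rlt (abs (cc j)) (Rinv (INR j.+1)).
Proof.
rewrite cc_def; apply: (proj1 (chP _ _)); apply: Rinv_0_lt_compat; apply: lt_0_INR.
by apply/ltP.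
Qed.

Lemma cc_big j : Rlt (Rmax eps0 (abs (Ssum (cs j)))) (abs (f (cc j))).
Proof.
rewrite cc_def; apply: (proj2 (chP _ _)); apply: Rinv_0_lt_compat; apply: lt_0_INR.
by apply/ltP.
Qed.

Lemma pgt0 : (0 < p)%N.
Proof. by apply: prime_gt0; case/andP: hp. Qed.

Definition idx j : mi n := madd (mscale p (uu j)) a.
Definition T j (nu : mi n) := mono (cc j) (idx j) nu.
Definition Xs J (nu : mi n) := \sum_(J <= j < (nu i0).+1) T j nu.

Lemma uuE j i : uu j i = if i == i0 then (j * K)%N else 0%N.
Proof. by rewrite ffunE. Qed.

Lemma idx_i0 j : idx j i0 = (j * K * p + a i0)%N.
Proof. by rewrite /idx !ffunE eqxx. Qed.

Lemma le_idx j : (j <= idx j i0)%N.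
Proof.
rewrite idx_i0; apply: leq_trans (leq_addr _ _); rewrite -mulnA.
by apply: leq_pmulr; rewrite muln_gt0 pgt0.
Qed.

Lemma T0 j (nu : mi n) : (nu i0 < j)%N -> T j nu = 0.
Proof.
move=> h; rewrite /T /mono; case: eqP => // e.
by move: h; rewrite e ltnNge le_idx.
Qed.

Lemma Xs_ext J L (nu : mi n) : ((nu i0).+1 <= L)%N -> \sum_(J <= j < L) T j nu = Xs J nu.
Proof.
elim: L => // L IH hL; rewrite leq_eqVlt in hL; case/orP: hL => [/eqP <-|hL] //.
have IH' := IH hL.
case: (leqP J L) => hJL.
  by rewrite big_nat_recr //= T0 // addr0 IH'.
rewrite ltnS in hL; rewrite big_geq // /Xs big_geq //; exact: leq_trans hL (ltnW hJL).
Qed.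

Lemma deg_uu j : deg (uu j) = (j * K)%N.
Proof.
rewrite /deg (bigD1 i0) //= big1 ?addn0 ?uuE ?eqxx // => i hi.
by rewrite uuE (negbTE hi).
Qed.

Lemma deg_idx j : deg (idx j) = (j * K * p + deg a)%N.
Proof. by rewrite /idx deg_madd deg_mscale deg_uu. Qed.

Lemma T_small eps : Rlt R0 eps -> exists N, forall j (nu : mi n), (N <= deg nu)%N -> Rlt (abs (T j nu)) eps.
Proof.
move=> he; have [N0 [hN0 N0pos]] := archimed_cor1 eps he.
exists (N0 * K * p + deg a)%N => j nu hnu; rewrite /T /mono.
case: eqP => [e|_]; last by rewrite abs0.
move: hnu; rewrite e deg_idx leq_add2r -!mulnA leq_pmul2r; last by rewrite muln_gt0 pgt0.
move=> hj; apply: Rlt_le_trans (cc_small j) _.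
apply: Rle_trans (_ : Rle (Rinv (INR N0)) eps); last lra.
apply: Rinv_le_contravar; first by apply: lt_0_INR.
apply: le_INR; apply/leP; exact: leqW.
Qed.

Lemma tate_Xs J : tate abs (Xs J).
Proof.
move=> eps he; have [N HN] := T_small he; exists N => nu hnu.
apply: abs_sum_lt => // j _; exact: HN.
Qed.

Lemma Xs_split J (nu : mi n) : Xs 0 nu = \sum_(j < J) T j nu + Xs J nu.
Proof.
set L := maxn J (nu i0).+1.
rewrite -(Xs_ext 0 (leq_maxr J _ : ((nu i0).+1 <= L)%N)).
rewrite -(Xs_ext J (leq_maxr J _ : ((nu i0).+1 <= L)%N)).
by rewrite (big_cat_nat _ (n:=J)) ?leq_maxl // big_mkord.
Qed.

Lemma Xs_vanish J (nu : mi n) : ~~ mle (mscale p (uu J)) nu -> Xs J nu = 0.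
Proof.
move=> hn; rewrite /Xs big_nat_cond big1 // => j /andP [/andP [hJ _] _].
rewrite /T /mono; case: eqP => // e; exfalso; move/negP: hn; apply.
apply/forallP=> i; rewrite e /idx !ffunE; case: eqP => _; last by rewrite mul0n.
apply: leq_trans (leq_addr _ _); rewrite leq_pmul2r ?pgt0 // leq_pmul2r //.
Qed.

Definition xs : series k n := Xs 0.

Lemma mono_idx j : mono (cc j) (idx j) = smul (mono 1 (mscale p (uu j))) (mono (cc j) a).
Proof. by rewrite smul_mono_mono mul1r. Qed.

Lemma xs_decomp J : xs = sadd (\big[@sadd k n/@szero k n]_(j < J) mono (cc j) (idx j))
  (smul (mono 1 (mscale p (uu J))) (shift (mscale p (uu J)) (Xs J))).
Proof.
rewrite -shiftE; last exact: Xs_vanish.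
apply: functional_extensionality => nu; rewrite /sadd ssum_coef /xs (Xs_split J).
by [].
Qed.

Lemma Ssum_cs J : Ssum (cs J) = \sum_(j < J) phi (mono (cc j) a) (madd m (uu (J - j))).
Proof.
have hn : forall j, (j < J)%N -> nth 0 (cs J) j = cc j by move=> j; exact: nth_cs.
rewrite /Ssum; move: (cs J) (size_cs J) hn => l <- hn.
by apply: eq_bigr => j _; rewrite hn.
Qed.

Lemma phi_xs_coef J : phi xs (madd m (uu J)) = Ssum (cs J) + f (cc J).
Proof.
have tT : tate abs (smul (mono 1 (mscale p (uu J.+1))) (shift (mscale p (uu J.+1)) (Xs J.+1))).
  by rewrite -shiftE; [exact: tate_Xs | exact: Xs_vanish].
rewrite (xs_decomp J.+1) (phiD hphi) //; last first.
  by apply: (tate_ssum habs) => j _; exact: (tate_mono habs).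
rewrite /sadd (phi_shift habs hphi); last by apply: tate_shift; exact: tate_Xs.
rewrite smul_mono ifF ?addr0; last first.
  apply/negP => /forallP /(_ i0); rewrite !ffunE eqxx mulSn [(m i0 + _)%N]addnC.
  by rewrite [(J * K + _)%N]addnC leq_add2r /K ltnn.
rewrite (phi_ssum habs hphi); last by move=> j _; exact: (tate_mono habs).
have HT : forall j, (j <= J)%N ->
    phi (mono (cc j) (idx j)) (madd m (uu J)) = phi (mono (cc j) a) (madd m (uu (J - j))).
  move=> j hj; rewrite mono_idx (phi_shift habs hphi); last exact: (tate_mono habs).
  rewrite smul_mono ifT; last first.
    apply/forallP=> i; rewrite !ffunE; case: eqP => _ //.
    by apply: leq_trans (leq_addl _ _); rewrite leq_mul2r hj orbT.
  rewrite mul1r; congr (phi _ _); apply/ffunP => i; rewrite !ffunE; case: eqP => _.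
    by rewrite mulnBl addnBA // leq_mul2r hj orbT.
  by rewrite !addn0 subn0.
rewrite ssum_coef big_ord_recr /= HT // subnn.
have -> : madd m (uu 0) = m by apply/ffunP=> i; rewrite !ffunE; case: eqP; rewrite ?addn0.
rewrite Ssum_cs; congr (_ + _); apply: eq_bigr => j _; rewrite HT //; exact: ltnW (ltn_ord j).
Qed.

Lemma contra : False.
Proof.
have tx : tate abs xs := tate_Xs 0.
have [N HN] := phi_tate hphi tx heps0.
have := HN (madd m (uu N)).
rewrite deg_madd deg_uu phi_xs_coef addrC => H.
have H' := H (leq_trans (leq_pmulr _ (ltn0Sn _)) (leq_addl _ _)).
have hb := cc_big N.
have h1 := Rmax_l eps0 (abs (Ssum (cs N))).
have h2 := Rmax_r eps0 (abs (Ssum (cs N))).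
have h3 := abs_strict habs (a := f (cc N)) (b := Ssum (cs N)).
have h4 : Rlt (abs (Ssum (cs N))) (abs (f (cc N))) by lra.
have h5 := h3 h4; apply: (Rlt_irrefl eps0); exact: (Rle_lt_trans _ _ _ h1 (Rlt_trans _ _ _ hb (Rle_lt_trans _ _ _ h5 H'))).
Qed.
End StepB.

Lemma big_abs (k : fieldType) (abs : k -> R) (habs : nonarch_abs abs) :
  abs_nontrivial abs -> exists t, Rlt R1 (abs t).
Proof.
case=> x [hx0 hx1].
have hx : x != 0 by apply/eqP.
have hxpos := abs_gt0 habs hx.
case: (Rlt_le_dec R1 (abs x)) => h; first by exists x.
exists x^-1; rewrite (absV habs hx).
have h' : Rlt (abs x) R1 by case: h => // e; exfalso; exact: hx1.
have e1 : R1 = Rinv R1 by field.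
rewrite {1}e1; apply: Rinv_lt_contravar => //; lra.
Qed.

Lemma L1 (k : fieldType) (p : nat) (abs : k -> R)
    (hp : p \in [pchar k]) (habs : nonarch_abs abs) (hnt : abs_nontrivial abs)
    (n : nat) : (0 < n)%N -> has_nonzero_pinv_map abs n p -> has_nonzero_cont_map abs p.
Proof.
case: n => // n' _.
case=> phi [hphi [x0 [hx0 hnz]]].
have pgt0 : (0 < p)%N by apply: prime_gt0; case/andP: hp.
have [c0 [a [m hcam]]] : exists c a m, phi (mono c a) m <> 0.
  apply: NNPP => H; apply: hnz; apply: (stepA habs hphi) => // c a m.
  by apply: NNPP => h; apply: H; exists c, a, m.
pose f c := phi (mono c a) m.
have fD : forall x y, f (x + y) = f x + f y by move=> x y; rewrite /f (phi_monoD habs hphi).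
have fZ : forall c x, f (c ^+ p * x) = c * f x.
  by move=> c x; rewrite /f (phi_scal habs hphi) smul_mono0.
have f0 : f 0 = 0.
  have h := fD 0 0; rewrite addr0 in h; by apply: (addrI (f 0)); rewrite addr0 -h.
have fB : forall y x, f y - f x = f (y - x).
  by move=> y x; have := fD (y - x) x; rewrite subrK => ->; rewrite addrK.
exists f; split => //; first by exists c0.
suff Hc : forall eps, Rlt R0 eps -> exists delta, Rlt R0 delta /\
    forall z, Rlt (root_abs abs p z) delta -> Rlt (abs (f z)) eps.
  move=> x eps he; have [d [hd Hd]] := Hc eps he; exists d; split => // y hy.
  rewrite fB; exact: Hd.
move=> eps0 he0; apply: NNPP => Hno.
have Hdisc : forall d, Rlt R0 d -> exists z, Rlt (abs z) d /\ Rle eps0 (abs (f z)).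
  move=> d hd; have [d' [hd' Hd']] := root_small2 pgt0 habs hd.
  apply: NNPP => H2; apply: Hno; exists d'; split => // z hz.
  apply: Rnot_le_lt => hle; apply: H2; exists z; split => //; exact: Hd' hz.
have [t ht] := big_abs habs hnt.
have Hunb : forall M d, Rlt R0 d -> exists z, Rlt (abs z) d /\ Rlt M (abs (f z)).
  move=> M d hd.
  have hta : Rgt (Rabs (abs t)) (IZR 1) by rewrite Rabs_pos_eq; lra.
  have [j Hj] := Pow_x_infinity (abs t) hta (Rdiv (Rplus (Rabs M) R1) eps0).
  have Hj' := Hj j (le_n j).
  rewrite Rabs_pos_eq in Hj'; last by apply: pow_le; lra.
  have hq : Rlt R0 (pow (abs t) (j * p)) by apply: pow_lt; lra.
  have [z [hz hfz]] := Hdisc (Rdiv d (pow (abs t) (j * p))) (Rdiv_lt_0_compat _ _ hd hq).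
  exists ((t ^+ j) ^+ p * z); split.
    rewrite (absM habs) !(absX habs) -pow_mult.
    have -> : d = Rmult (pow (abs t) (j * p)) (Rdiv d (pow (abs t) (j * p))) by field; lra.
    by apply: Rmult_lt_compat_l.
  rewrite fZ (absM habs) (absX habs).
  have hpj : Rlt R0 (pow (abs t) j) by apply: pow_lt; lra.
  have h1 : Rle (Rmult (pow (abs t) j) eps0) (Rmult (pow (abs t) j) (abs (f z))).
    by apply: Rmult_le_compat_l; lra.
  have h2 : Rle (Rplus (Rabs M) R1) (Rmult (pow (abs t) j) eps0).
    have := Rmult_le_compat_r eps0 _ _ (Rlt_le _ _ he0) (Rge_le _ _ Hj').
    rewrite /Rdiv Rmult_assoc Rinv_l; last lra.
    rewrite Rmult_1_r; lra.
  have h3 := Rle_abs M.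
  lra.
pose ch M d := epsilon (inhabits 0) (fun z => Rlt (abs z) d /\ Rlt M (abs (f z))).
have chP : forall M d, Rlt R0 d -> Rlt (abs (ch M d)) d /\ Rlt M (abs (f (ch M d))).
  by move=> M d hd; exact: (epsilon_spec (inhabits 0) _ (Hunb M d hd)).
exact: (contra habs hp hphi he0 chP).
Qed.

Lemma split_nonzero (k : fieldType) (p : nat) (abs : k -> R) (habs : nonarch_abs abs) n :
  frobenius_split abs n p -> has_nonzero_pinv_map abs n p.
Proof.
case=> phi [hphi e]; exists phi; split => //; exists (@sone k n); split.
  rewrite sone_mono; exact: (tate_mono habs).
rewrite e => /(congr1 (fun s : series k n => s [ffun => 0%N])).
rewrite /sone /szero eqxx => /eqP; by rewrite GRing.oner_eq0.
Qed.

Theorem theoremB (k : fieldType) (p : nat) (abs : k -> R)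
    (hp : p \in [pchar k]) (habs : nonarch_abs abs)
    (hcomp : abs_complete abs) (hnt : abs_nontrivial abs) :
  [<-> forall n : nat, (0 < n)%N -> frobenius_split abs n p;
       forall n : nat, (0 < n)%N -> has_nonzero_pinv_map abs n p;
       exists2 n : nat, (0 < n)%N & has_nonzero_pinv_map abs n p;
       has_nonzero_pinv_map abs 1 p;
       frobenius_split abs 1 p;
       has_nonzero_cont_map abs p].
Proof.
tfae.
- by move=> H n hn; apply: (split_nonzero habs); apply: H.
- by move=> H; exists 1%N => //; apply: H.
- case=> n hn H; apply: (split_nonzero habs); apply: (L2 hp habs).
  exact: (L1 hp habs hnt hn H).
- move=> H; apply: (L2 hp habs); exact: (L1 hp habs hnt (ltn0Sn 0) H).
- move=> H; apply: (L1 hp habs hnt (ltn0Sn 0)); exact: (split_nonzero habs).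
- by move=> H n _; apply: (L2 hp habs).
Qed.
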